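(* Let $m\neq 0$ and $k$ be real constants, let $\mathbf{q}_0,\mathbf{p}_0\in\mathbb{R}^3$ with $\mathbf{q}_0\neq 0$, and let $h_0>0$. Run the numerical scheme described in the context and assume that all quantities it produces are well defined for every $n\ge 0$ (all denominators nonzero). Then the discrete angular momentum $\mathbf L_n=\mathbf q_n\times\mathbf p_n$ is independent of $n$: $\mathbf L_n=\mathbf q_0\times\mathbf p_0$ for all $n\ge 0$.
   Context: The scheme is a discretization of the Kepler problem $\dot{\mathbf p}=-k\mathbf q/|\mathbf q|^3$, $\mathbf p=m\dot{\mathbf q}$ in $\mathbb{R}^3$. For a vector $\mathbf v$ write $v=|\mathbf v|$. Initialization: put $q_0=|\mathbf q_0|$, $$S_0=\frac{h_0\,\mathbf q_0\cdot\mathbf p_0}{m\,q_0},\qquad \mathbf r_0=\mathbf q_0+\frac{h_0}{2m}\Big(\frac{S_0}{q_0+\sqrt{q_0^2+S_0^2}}-1\Big)\mathbf p_0,\qquad \mathbf r_1=\mathbf r_0+\frac{h_0\mathbf p_0}{m},$$ and let $\delta\in[0,\pi/2)$ be defined by $\cos 2\delta=\dfrac{r_0^2+\mathbf r_0\cdot\mathbf P_0}{r_0\sqrt{r_0^2+2\mathbf r_0\cdot\mathbf P_0+\mathbf P_0^2}}$, where $\mathbf P_0=h_0\mathbf p_0/m$ (equivalently $\cos2\delta=\mathbf r_0\cdot\mathbf r_1/(r_0r_1)$). Iteration: for $n=0,1,2,\dots$, given $\mathbf r_n,\mathbf r_{n+1},\mathbf p_n,h_n$, define $$\mathbf p_{n+1}=\mathbf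 p_n-\frac{k h_n\,\mathbf r_{n+1}}{r_{n+1}^2 r_n\cos\delta},\qquad h_{n+1}=\frac{h_n}{\dfrac{2r_n\cos2\delta}{r_{n+1}}-1+\dfrac{k h_n^2}{m\,r_{n+1}^2 r_n\cos\delta}},$$ $$\mathbf r_{n+2}=\mathbf r_{n+1}+\frac{h_{n+1}\mathbf p_{n+1}}{m},\qquad \mathbf q_{n+1}=\frac{r_{n+2}\mathbf r_{n+1}+r_{n+1}\mathbf r_{n+2}}{r_{n+1}+r_{n+2}} .$$ The initial $\mathbf q_0$ is the given one. *)

(* Defs.v *)
From HB Require Import structures.
From mathcomp Require Import all_boot all_order all_algebra.
From mathcomp Require Import reals trigo.
Set Implicit Arguments. Unset Strict Implicit. Unset Printing Implicit Defensive.
Import Order.TTheory GRing.Theory Num.Theory.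
Local Open Scope ring_scope.

Section Vec3.
Variable R : realType.

Definition dotp (u v : 'rV[R]_3) : R := \sum_(i < 3) u 0 i * v 0 i.

Definition vnorm (v : 'rV[R]_3) : R := Num.sqrt (dotp v v).

Definition crossp (u v : 'rV[R]_3) : 'rV[R]_3 :=
  let c i := u 0 (@inord 2 i) in
  let d i := v 0 (@inord 2 i) in
  \row_(i < 3) nth 0 [:: c 1%N * d 2%N - c 2%N * d 1%N;
                        c 2%N * d 0%N - c 0%N * d 2%N;
                        c 0%N * d 1%N - c 1%N * d 0%N] i.
End Vec3.

(* Main.v *)
Require Import Defs.
From HB Require Import structures.
From mathcomp Require Import all_boot all_order all_algebra.
From mathcomp Require Import reals trigo.
From mathcomp Require Import ring.
Import Order.TTheory GRing.Theory Num.Theory.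
Local Open Scope ring_scope.

Ltac cpt := rewrite /crossp; apply/rowP; case => [[|[|[|?]]] ?] //=; rewrite !mxE /=; ring.

Lemma cA (R : realType) (u v : 'rV[R]_3) c x y t :
  crossp (c*:(x*:u + y*:(u + t*:v))) v = (c*(x+y)) *: crossp u v.
Proof. cpt. Qed.
Lemma cB (R : realType) (u w : 'rV[R]_3) a :
  crossp u (w - a *: u) = crossp u w.
Proof. cpt. Qed.
Lemma cC (R : realType) (u w : 'rV[R]_3) t :
  crossp (u + t *: w) w = crossp u w.
Proof. cpt. Qed.
Theorem mainTheorem2 (R : realType) (m k h0 : R) (q0 p0 : 'rV[R]_3)
  (delta : R) (r p q : nat -> 'rV[R]_3) (h : nat -> R) :
  m != 0 -> q0 != 0 -> 0 < h0 ->
  (* initialization *)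
  let nq0 := vnorm q0 in
  let S0 := h0 * dotp q0 p0 / (m * nq0) in
  let P0 := (h0 / m) *: p0 in
  nq0 + Num.sqrt (nq0 ^+ 2 + S0 ^+ 2) != 0 ->
  r 0%N = q0 + (h0 / (2 * m) * (S0 / (nq0 + Num.sqrt (nq0 ^+ 2 + S0 ^+ 2)) - 1)) *: p0 ->
  r 1%N = r 0%N + (h0 / m) *: p0 ->
  vnorm (r 0%N) * Num.sqrt (vnorm (r 0%N) ^+ 2 + 2 * dotp (r 0%N) P0 + vnorm P0 ^+ 2) != 0 ->
  0 <= delta < pi / 2 ->
  cos (2 * delta) = (vnorm (r 0%N) ^+ 2 + dotp (r 0%N) P0) /
      (vnorm (r 0%N) * Num.sqrt (vnorm (r 0%N) ^+ 2 + 2 * dotp (r 0%N) P0 + vnorm P0 ^+ 2)) ->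
  p 0%N = p0 -> h 0%N = h0 -> q 0%N = q0 ->
  (* all denominators of the iteration are nonzero *)
  (forall n : nat,
      [/\ vnorm (r n.+1) ^+ 2 * vnorm (r n) * cos delta != 0,
          vnorm (r n.+1) != 0,
          2 * vnorm (r n) * cos (2 * delta) / vnorm (r n.+1) - 1
            + k * h n ^+ 2 / (m * vnorm (r n.+1) ^+ 2 * vnorm (r n) * cos delta) != 0
        & vnorm (r n.+1) + vnorm (r n.+2) != 0]) ->
  (* iteration *)
  (forall n : nat,
      p n.+1 = p n - (k * h n / (vnorm (r n.+1) ^+ 2 * vnorm (r n) * cos delta)) *: r n.+1) ->
  (forall n : nat,
      h n.+1 = h n / (2 * vnorm (r n) * cos (2 * delta) / vnorm (r n.+1) - 1
                      + k * h n ^+ 2 / (m * vnorm (r n.+1) ^+ 2 * vnorm (r n) * cos delta))) ->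
  (forall n : nat, r n.+2 = r n.+1 + (h n.+1 / m) *: p n.+1) ->
  (forall n : nat,
      q n.+1 = (vnorm (r n.+1) + vnorm (r n.+2))^-1 *:
                 (vnorm (r n.+2) *: r n.+1 + vnorm (r n.+1) *: r n.+2)) ->
  forall n : nat, crossp (q n) (p n) = crossp q0 p0.
Proof.
move=> mN0 _ _ nq0 S0 P0 _ Hr0 Hr1 _ _ _ Hp0 Hh0 Hq0 Hden Hp _ Hr Hq.
have Hrp : forall n, crossp (r n) (p n) = crossp q0 p0.
  elim=> [|n IH].
    by rewrite Hr0 Hp0 cC.
  rewrite Hp cB.
  have -> : r n.+1 = r n + (h n / m) *: p n.
    case: n {IH} => [|n]; [by rewrite Hr1 Hp0 Hh0 | exact: Hr].
  by rewrite cC.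
case=> [|n]; first by rewrite Hq0 Hp0.
rewrite Hq Hr cA [X in _^-1 * X]addrC mulVf; first by rewrite scale1r Hrp.
have [_ _ _ H4] := Hden n. rewrite (Hr n) in H4. exact: H4.
Qed.
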